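(* Let $n\ge 2$, identify $\mathbb{C}^n\cong\mathbb{R}^{2n}$ with its standard complex structure and coordinates $z_1,\dots,z_n$, and let $w=\mathrm{Re}(dz_1\wedge\cdots\wedge dz_n)$. Let $P\subset\mathbb{C}^n$ be a complex linear subspace of real codimension two. Let $k\in\mathbb{N}\setminus\{0\}$ and $\alpha$ satisfy $k\alpha=2\pi$ and $0<\alpha\le\pi$. For $\beta\in\mathbb{R}$, let $R_{(\beta,P)}$ denote the rotation of $\mathbb{R}^{2n}$ about $P$ by angle $\beta$, i.e. the orthogonal map fixing $P$ pointwise and rotating the real $2$-plane $P^\perp$ by the angle $\beta$. For $i=0,1,\dots,k-1$ let $w_i=R_{(i\alpha,P)}(w)$ be the image of the form $w$ under this rotation. Then each $w_i$ is a special Lagrangian calibration, and $$\sum_{i=0}^{k-1} w_i=0.$$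
   Context: A special Lagrangian (SL) calibration on $\mathbb{C}^n$ is an $n$-form of the form $\mathrm{Re}\big(e^{i\theta}\,d\zeta_1\wedge\cdots\wedge d\zeta_n\big)$, $\theta\in\mathbb{R}$, where $\zeta_1,\dots,\zeta_n$ are complex linear coordinates obtained from $z_1,\dots,z_n$ by a unitary change of coordinates (equivalently, the transform of $\mathrm{Re}(dz_1\wedge\cdots\wedge dz_n)$ by a complex-linear isometry). *)

(* Defs.v *)
From HB Require Import structures.
From mathcomp Require Import all_boot all_order all_algebra.
From mathcomp Require Import complex.
From mathcomp Require Import all_classical all_reals all_analysis.
Set Implicit Arguments. Unset Strict Implicit. Unset Printing Implicit Defensive.
Import Order.TTheory GRing.Theory Num.Theory.
Local Open Scope ring_scope.

Section Defs.
Variables (R : realType) (n : nat).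
Local Notation C := R[i].

Definition vec := 'rV[C]_n.

(* A real n-form on C^n = R^{2n}, viewed as a function of n vectors
   (alternation/multilinearity are automatic for the forms we build). *)
Definition nform := ('I_n -> vec) -> R.

Definition rows (v : 'I_n -> vec) : 'M[C]_n := \matrix_(i < n) v i.

Definition adjmx (A : 'M[C]_n) : 'M[C]_n := (map_mx (@conjc R) A)^T.

Definition hdot (x y : vec) : C := (x *m (map_mx (@conjc R) y)^T) 0 0.

(* w = Re(dz_1 /\ ... /\ dz_n):  (dz_1/\../\dz_n)(v_1..v_n) = det [dz_i(v_j)] *)
Definition w0 : nform := fun v => complex.Re (\det (rows v)).

Definition unitary (U : 'M[C]_n) : Prop := U *m adjmx U = 1%:M.

Definition expi (t : R) : C := (cos t +i* sin t)%C.

(* SL calibration: Re(e^{i theta} dzeta_1/\../\dzeta_n), zeta = U z, U unitary.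
   zeta(v) = v *m U^T for a row vector v. *)
Definition SL_calibration (om : nform) : Prop :=
  exists (theta : R) (U : 'M[C]_n), unitary U /\
    forall v : 'I_n -> vec, om v = complex.Re (expi theta * \det (rows v *m U^T)).

Definition inP (P : 'M[C]_n) (x : vec) : Prop := (x <= P)%MS.

(* real orthogonal complement of P (standard Euclidean product on R^{2n}
   is Re of the Hermitian product) *)
Definition perpP (P : 'M[C]_n) (y : vec) : Prop :=
  forall p : vec, inP P p -> complex.Re (hdot p y) = 0.

(* f is the rotation R_(beta,P) of R^{2n} about P by the angle beta:
   real-linear, fixing P pointwise, and rotating the real plane P^perp
   (a complex line) by beta, i.e. acting on it by multiplication by e^{i beta}
   (orientation of P^perp induced by the complex structure). *)
Definition is_rotation (beta : R) (P : 'M[C]_n) (f : vec -> vec) : Prop :=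
  [/\ (forall x y, f (x + y) = f x + f y),
      (forall (r : R) x, f ((r%:C)%C *: x) = (r%:C)%C *: f x),
      (forall x, inP P x -> f x = x) &
      (forall y, perpP P y -> f y = expi beta *: y)].

(* om' is the image (push-forward) of om under the bijective linear map f:
   om'(f v_1, ..., f v_n) = om(v_1, ..., v_n). *)
Definition is_image_form (f : vec -> vec) (om om' : nform) : Prop :=
  forall v : 'I_n -> vec, om' (fun j => f (v j)) = om v.

End Defs.

(* Main.v *)
Require Import Defs.
From HB Require Import structures.
From mathcomp Require Import all_boot all_order all_algebra.
From mathcomp Require Import complex ring lra.
From mathcomp Require Import all_classical all_reals all_analysis.
Import Order.TTheory GRing.Theory Num.Theory.
Local Open Scope ring_scope.

Lemma det1Dmul (F : comNzRingType) n (s : 'cV[F]_n) (u : 'rV_n) :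
  \det (1%:M + s *m u) = 1 + (u *m s) 0 0.
Proof.
have E1 : block_mx 1%:M (-s) u 1%:M =
   block_mx 1%:M 0 u 1%:M *m block_mx 1%:M (-s) 0 (1%:M + u *m s).
  rewrite mulmx_block !mul1mx !mul0mx ?mulmx0 !addr0 ?add0r ?mulmx1 ?mulmxN.
  by rewrite addrC addrK.
have E2 : block_mx 1%:M (-s) u 1%:M =
   block_mx (1%:M + s *m u) (-s) 0 1%:M *m block_mx 1%:M 0 u 1%:M.
  rewrite mulmx_block !mul1mx !mul0mx ?mulmx0 ?addr0 ?add0r ?mulmx1 ?mulNmx.
  by rewrite addrK.
have := congr1 determinant E1; rewrite E2 !det_mulmx !det_lblock !det_ublock.
rewrite !det1 !mul1r !mulr1 => ->.
by rewrite det_mx11 mxE mxE eqxx.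
Qed.

Section S.
Context {R : realType}.
Local Notation C := R[i].

Lemma expiD (a b : R) : expi (a + b) = expi a * expi b.
Proof. rewrite /expi cosD sinD; apply/eqP; rewrite eq_complex /=; apply/andP; split; apply/eqP; ring. Qed.

Lemma expi0 : expi (0:R) = 1.
Proof. by rewrite /expi cos0 sin0. Qed.

Lemma expiN (a : R) : expi (- a) * expi a = 1.
Proof. by rewrite -expiD addNr expi0. Qed.

Lemma expi_neq0 (a : R) : expi a != 0.
Proof. apply/eqP=> h; have := expiN a; rewrite h mulr0 => /eqP; rewrite eq_sym oner_eq0. by []. Qed.

Lemma expiV (a : R) : expi (- a) = (expi a)^-1.
Proof. apply: (mulIf (expi_neq0 a)); by rewrite expiN mulVf ?expi_neq0. Qed.


Lemma expi_nat (a : R) (i : nat) : expi (i%:R * a) = expi a ^+ i.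
Proof.
elim: i => [|i IH]; first by rewrite mul0r expi0 expr0.
by rewrite -addn1 natrD mulrDl mul1r expiD IH addn1 exprSr.
Qed.

Lemma rowsM n (v : 'I_n -> vec R n) (M : 'M[C]_n) :
  rows (fun j => v j *m M) = rows v *m M.
Proof.
apply/matrixP => i j; rewrite !mxE; apply: eq_bigr => l _; by rewrite !mxE.
Qed.

Lemma ReD (a b : C) : complex.Re (a + b) = complex.Re a + complex.Re b.
Proof. by case: a; case: b. Qed.

Lemma Re_sum (I : Type) (r : seq I) (F : I -> C) :
  complex.Re (\sum_(i <- r) F i) = \sum_(i <- r) complex.Re (F i).
Proof.
elim: r => [|x r IH]; first by rewrite !big_nil.
by rewrite !big_cons ReD IH.
Qed.
Lemma rot_mx n (P : 'M[C]_n) (beta : R) (f : vec R n -> vec R n) :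
  (1 <= n)%N -> \rank P = n.-1 -> is_rotation beta P f ->
  exists M : 'M[C]_n, \det M = expi beta /\ forall x, f x = x *m M.
Proof.
move=> n1 rP [fD _ fP fQ].
set K := kermx P^T.
have rK : \rank K = 1%N by rewrite /K mxrank_ker mxrank_tr rP -{1}(prednK n1) subSnn.
set y := nz_row K.
have y0 : y != 0 by rewrite nz_row_eq0 -mxrank_eq0 rK.
have yK : (y *m P^T = 0) by apply/sub_kermxP; exact: nz_row_sub.
set s := y^T.
have Ps : P *m s = 0 by rewrite /s -[P]trmxK -trmx_mul yK trmx0.
set u := map_mx (@conjc R) y.
set N := (u *m s) 0 0.
have N0 : N != 0.
  apply/eqP => hN.
  have hs : forall j, true -> 0 <= y 0 j * (y 0 j)^*%C by move=> j _; exact: mulcJ_ge0.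
  have : \sum_(j < n) y 0 j * (y 0 j)^*%C = 0.
    by rewrite -[RHS]hN /N mxE; apply: eq_bigr => j _; rewrite !mxE mulrC.
  move=> /(psumr_eq0P hs) hz; move/eqP: y0; apply; apply/matrixP => i j.
  rewrite ord1 mxE; have := hz j isT; move/eqP; rewrite mulf_eq0 conjc_eq0 orbb.
  by move/eqP.
have rs : \rank s = 1%N.
  apply/eqP; rewrite eqn_leq rank_leq_col lt0n mxrank_eq0 /s.
  by apply: contra y0 => /eqP h; rewrite -[y]trmxK h trmx0.
have PK : (P <= kermx s)%MS by apply/sub_kermxP.
have KP : (kermx s <= P)%MS.
  have := (mxrank_leqif_eq PK).2; rewrite mxrank_ker rs rP subn1 eqxx.
  by move/esym/andP => [].
have sub0 : forall p : vec R n, inP P p -> p *m s = 0.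
  by move=> p pP; apply/sub_kermxP; exact: submx_trans pP PK.
have uu : map_mx (@conjc R) u = y.
  by apply/matrixP => i j; rewrite !mxE conjcK.
have hd : forall x : vec R n, hdot x u = (x *m s) 0 0.
  by move=> x; rewrite /hdot uu.
set e := expi beta.
have fx : forall x : vec R n, f x = x + ((e - 1) * ((x *m s) 0 0 / N)) *: u.
  move=> x; set c := (x *m s) 0 0 / N.
  have xP : inP P (x - c *: u).
    rewrite /inP; apply: submx_trans KP; apply/sub_kermxP.
    apply/matrixP => i j; rewrite !ord1 mulmxBl -scalemxAl [LHS]mxE [X in _ + X]mxE [X in _ - X]mxE -/N.
    by rewrite /c divfK // subrr mxE.
  have cQ : perpP P (c *: u).
    move=> p pP; rewrite /hdot.
    have -> : map_mx (@conjc R) (c *: u) = (c^*)%C *: y.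
      by apply/matrixP => i j; rewrite !mxE rmorphM /= conjcK.
    by rewrite linearZ /= -scalemxAr sub0 // scaler0 mxE.
  rewrite -{1}(subrK (c *: u) x) fD fP // fQ // scalerA mulrBl mul1r scalerBl.
  by rewrite [RHS]addrCA [LHS]addrC.
exists (1%:M + ((e - 1) / N) *: (s *m u)); split.
  by rewrite scalemxAl det1Dmul -scalemxAr mxE -/N divfK // addrC subrK.
move=> x; rewrite fx mulmxDr mulmx1 -scalemxAr mulmxA [x *m s]mx11_scalar mul_scalar_mx.
rewrite scalerA; congr (_ + _ *: _); by rewrite mxE mulr1n mulrA mulrAC.
Qed.
End S.

Theorem lemma4 (R : realType) (n : nat) (P : 'M[R[i]]_n) (k : nat) (alpha : R)
  (rot : nat -> vec R n -> vec R n) (w : nat -> nform R n) :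
  (2 <= n)%N ->
  \rank P = n.-1 ->
  (0 < k)%N ->
  k%:R * alpha = 2 * pi ->
  0 < alpha <= pi ->
  (forall i : nat, is_rotation (i%:R * alpha) P (rot i)) ->
  (forall i : nat, is_image_form (rot i) (w0 (n:=n)) (w i)) ->
  (forall i : nat, (i < k)%N -> SL_calibration (w i)) /\
  (forall v : 'I_n -> vec R n, \sum_(i < k) w i v = 0).
Proof.
move=> n2 rP k0 hk ha hrot himg.
have n1 : (1 <= n)%N by apply: leq_trans n2.
have wE : forall (i : nat) (v : 'I_n -> vec R n),
    w i v = complex.Re (expi (- (i%:R * alpha)) * \det (rows v)).
  move=> i v.
  have [M [dM fM]] := @rot_mx R n P _ _ n1 rP (hrot i).
  have uM : M \in unitmx by rewrite unitmxE dM unitfE expi_neq0.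
  have := himg i (fun j => v j *m invmx M).
  have -> : (fun j => rot i (v j *m invmx M)) = v.
    by apply: boolp.funext => j; rewrite fM mulmxKV.
  move=> ->; rewrite /w0 rowsM det_mulmx det_inv dM expiV mulrC.
  by [].
split.
  move=> i _; exists (- (i%:R * alpha)), 1%:M; split.
    by rewrite /unitary /adjmx map_mx1 trmx1 mulmx1.
  by move=> v; rewrite wE trmx1 mulmx1.
move=> v.
under eq_bigr => i _ do rewrite wE -mulrN expi_nat.
rewrite -Re_sum -big_distrl /=.
set z := expi (- alpha).
suff -> : \sum_(i < k) z ^+ i = 0 by rewrite mul0r.
have zk : z ^+ k = 1.
  rewrite /z -expi_nat mulrN hk /expi cosN sinN mulr_natl cos2pi sin2pi oppr0.
  by [].
have z1 : z - 1 != 0.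
  rewrite subr_eq0 /z expiV; apply/negP => /eqP h.
  have h1 : expi alpha = 1 by rewrite -[expi alpha]invrK h invr1.
  move: h1; rewrite /expi => -[hc hs].
  case/andP: ha => a0 api.
  move: api; rewrite le_eqVlt => /orP [/eqP ep | lp].
    by move: hc; rewrite ep cospi => hc1; clear -hc1; lra.
  have := sin_gt0_pi (x:=alpha); rewrite a0 lp hs ltxx => /(_ isT).
  by [].
have := subrX1 z k; rewrite zk subrr => /esym /eqP; rewrite mulf_eq0 (negbTE z1) /=.
by move/eqP.
Qed.
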